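(* There is no finite set $\mathsf{Ax}$ of finitary $\Delta$-quasiequations that is both sound and complete for discrete sequence algebras; i.e. for every finite set $\mathsf{Ax}$ of finitary $\Delta$-quasiequations all valid for discrete sequence algebras, there exists a finitary $\Delta$-quasiequation valid for discrete sequence algebras that is not $\mathsf{Ax}$-provable.
   Context: $\Delta$ is the signature with two unary operation symbols $\ominus$ and $\bigcirc$. Terms are built from a countably infinite set of variables. A discrete sequence algebra is the set $A^\omega$ of all sequences over an arbitrary set $A$, with $\ominus(\varphi)=(\varphi(0),\varphi(0),\ldots)$ and $\bigcirc(\varphi)=(\varphi(1),\varphi(2),\ldots)$. A finitary quasiequation is $P\Rightarrow s=t$ with $P$ a finite set of identities between terms; it is valid if in every discrete sequence algebra and every assignment of variables to elements, if all identities of $P$ hold then $s=t$ holds. $\mathsf{Ax}_=$ consists of the quasiequations of equational logic: $\Rightarrow x=x$; $x=y\Rightarrow y=x$; $x=y,y=z\Rightarrow x=z$; $x=y\Rightarrow \mathsf f(x)=\mathsf f(y)$ for $\mathsf f\in\{\ominus,\bigcirc\}$. A proof of $P\Rightarrow s=t$ from $\mathsf{Ax}$ is a finite tree labelled by identities, with root $s=t$, each inner node with label $u=v$ and children $u_1=v_1,\ldots,u_n=v_n$ forming a substitution instance $u_1=v_1,\ldots,u_n=v_n\Rightarrow u=v$ of a quasiequation in $\mathsf{Ax}\cup\mathsf{Ax}_=$, and each leaf labelled either by an identity of $P$ or a substitution instance of a premise-free quasiequation of $\mathsf{Ax}\cup\mathsf{Ax}_=$. $P\Rightarrow s=t$ is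 $\mathsf{Ax}$-provable if such a proof exists. *)

(* Defs.v *)
From Stdlib Require Import List.
Import ListNotations.

(* Terms over the signature Delta = {ominus, bigcirc} (two unary symbols),
   with countably many variables indexed by nat. *)
Inductive term : Type :=
| Var : nat -> term
| Ominus : term -> term
| Next : term -> term.

Definition identity : Type := (term * term)%type.

Record quasiequation : Type := QE { qe_prem : list identity; qe_concl : identity }.

(* Discrete sequence algebra A^omega: sequences are functions nat -> A. *)
Definition ds_ominus {A : Type} (phi : nat -> A) : nat -> A := fun _ => phi 0.
Definition ds_next {A : Type} (phi : nat -> A) : nat -> A := fun n => phi (S n).

Fixpoint eval {A : Type} (v : nat -> (nat -> A)) (t : term) : nat -> A :=
  match t with
  | Var x => v x
  | Ominus u => ds_ominus (eval v u)
  | Next u => ds_next (eval v u)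
  end.

Definition holds {A : Type} (v : nat -> (nat -> A)) (e : identity) : Prop :=
  eval v (fst e) = eval v (snd e).

Definition valid (q : quasiequation) : Prop :=
  forall (A : Type) (v : nat -> (nat -> A)),
    (forall e, In e (qe_prem q) -> holds v e) -> holds v (qe_concl q).

Fixpoint subst (sg : nat -> term) (t : term) : term :=
  match t with
  | Var x => sg x
  | Ominus u => Ominus (subst sg u)
  | Next u => Next (subst sg u)
  end.

Definition subst_id (sg : nat -> term) (e : identity) : identity :=
  (subst sg (fst e), subst sg (snd e)).

Definition Ax_eq : list quasiequation :=
  [ QE [] (Var 0, Var 0);
    QE [(Var 0, Var 1)] (Var 1, Var 0);
    QE [(Var 0, Var 1); (Var 1, Var 2)] (Var 0, Var 2);
    QE [(Var 0, Var 1)] (Ominus (Var 0), Ominus (Var 1));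
    QE [(Var 0, Var 1)] (Next (Var 0), Next (Var 1)) ].

(* Leaves are identities of P or substitution instances of
   premise-free quasiequations (the case of empty premise list below). *)
Inductive provable (Ax : list quasiequation) (P : list identity) : identity -> Prop :=
| prov_hyp : forall e, In e P -> provable Ax P e
| prov_rule : forall (q : quasiequation) (sg : nat -> term),
    In q (Ax ++ Ax_eq) ->
    (forall e, In e (qe_prem q) -> provable Ax P (subst_id sg e)) ->
    provable Ax P (subst_id sg (qe_concl q)).

(* Main.v *)
Require Import Defs.
From Stdlib Require Import List.
From Stdlib Require Import Lia Arith FunctionalExtensionality Classical.
Import ListNotations.

Definition succ (n e : nat) : nat := if S e <? n then S e else 0.

Fixpoint evalM (n : nat) (v : nat -> option nat) (t : term) : option nat :=
  match t with
  | Var x => v x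
  | Ominus _ => None
  | Next u => option_map (succ n) (evalM n v u)
  end.

Definition holdsM n v (e : identity) := evalM n v (fst e) = evalM n v (snd e).
Definition inS (n : nat) (o : option nat) : Prop :=
  match o with None => True | Some e => e < n end.
Definition Msat n q := forall v, (forall x, inS n (v x)) ->
  (forall e, In e (qe_prem q) -> holdsM n v e) -> holdsM n v (qe_concl q).

Lemma subst_evalM n v sg t :
  evalM n v (subst sg t) = evalM n (fun x => evalM n v (sg x)) t.
Proof. induction t; simpl; try rewrite IHt; reflexivity. Qed.

Lemma succ_lt n e : e < n -> succ n e < n.
Proof. unfold succ; destruct (Nat.ltb_spec (S e) n); lia. Qed.

Lemma evalM_inS n v t : (forall x, inS n (v x)) -> inS n (evalM n v t).
Proof.
  intro Hv; induction t; simpl; auto.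
  destruct (evalM n v t); simpl in *; auto. apply succ_lt; auto.
Qed.

Lemma Ax_eq_sat n q : In q Ax_eq -> Msat n q.
Proof.
  intro H; simpl in H.
  destruct H as [<-|[<-|[<-|[<-|[<-|[]]]]]]; intros v _ Hp; unfold holdsM in *; simpl in *.
  - reflexivity.
  - symmetry; apply (Hp (Var 0, Var 1)); auto.
  - pose proof (Hp (Var 0, Var 1) ltac:(auto)); pose proof (Hp (Var 1, Var 2) ltac:(auto));
    simpl in *; congruence.
  - reflexivity.
  - pose proof (Hp (Var 0, Var 1) ltac:(auto)); simpl in *; rewrite H; reflexivity.
Qed.

Lemma soundM n Ax P e : provable Ax P e -> (forall q, In q Ax -> Msat n q) ->
  forall v, (forall x, inS n (v x)) -> (forall e, In e P -> holdsM n v e) -> holdsM n v e.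
Proof.
  intros Hpr HAx v Hv HP. induction Hpr as [e He| q sg Hq Hprem IH].
  - auto.
  - unfold holdsM, subst_id; simpl. rewrite !subst_evalM.
    assert (Hs : Msat n q).
    { apply in_app_or in Hq; destruct Hq; [auto| apply Ax_eq_sat; auto]. }
    apply Hs.
    + intro x. apply evalM_inS; auto.
    + intros e0 He0. specialize (IH e0 He0). unfold holdsM, subst_id in IH; simpl in IH.
      rewrite !subst_evalM in IH. exact IH.
Qed.

Fixpoint nexts (i : nat) (t : term) : term :=
  match i with 0 => t | S i => Next (nexts i t) end.

Definition qn (n : nat) : quasiequation :=
  QE ((nexts n (Var 0), Var 0) ::
        map (fun i => (Ominus (nexts i (Var 0)), Ominus (Var 0))) (seq 0 n))
     (Ominus (Var 0), Var 0).

Lemma eval_nexts A (v : nat -> nat -> A) i t k : eval v (nexts i t) k = eval v t (i + k).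
Proof.
  revert k; induction i; intro k; simpl; auto.
  unfold ds_next. rewrite IHi. f_equal. lia.
Qed.

Lemma qn_valid n : 0 < n -> valid (qn n).
Proof.
  intros Hn A v Hp. unfold holds; simpl.
  assert (H1 : forall k, v 0 (n + k) = v 0 k).
  { intro k. pose proof (Hp _ (or_introl eq_refl)) as H. unfold holds in H; simpl in H.
    pose proof (equal_f H k) as H'. rewrite eval_nexts in H'. exact H'. }
  assert (H2 : forall i, i < n -> v 0 i = v 0 0).
  { intros i Hi.
    assert (Hin : In (Ominus (nexts i (Var 0)), Ominus (Var 0)) (qe_prem (qn n))).
    { simpl. right. apply in_map_iff. exists i; split; auto. apply in_seq; lia. }
    pose proof (Hp _ Hin) as H. unfold holds in H; simpl in H.
    pose proof (equal_f H 0) as H'. unfold ds_ominus in H'. rewrite eval_nexts in H'.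
    rewrite Nat.add_0_r in H'. exact H'. }
  apply functional_extensionality. intro k. unfold ds_ominus.
  induction k as [k IH] using (well_founded_induction lt_wf).
  destruct (Nat.lt_ge_cases k n).
  - symmetry; auto.
  - replace k with (n + (k - n)) by lia. rewrite H1. apply IH. lia.
Qed.

Fixpoint iterS n k m := match k with 0 => m | S k => succ n (iterS n k m) end.

Lemma iterS_0 n k : k < n -> iterS n k 0 = k.
Proof.
  induction k; intro H; simpl; auto. rewrite IHk by lia. unfold succ.
  destruct (Nat.ltb_spec (S k) n); lia.
Qed.

Lemma evalM_nexts n v i t : evalM n v (nexts i t) =
  match evalM n v t with None => None | Some m => Some (iterS n i m) end.
Proof.
  induction i; simpl. destruct (evalM n v t); auto.
  rewrite IHi. destruct (evalM n v t); auto.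
Qed.

Lemma qn_fails n : 0 < n -> ~ Msat n (qn n).
Proof.
  intros Hn H. specialize (H (fun _ => Some 0)).
  assert (Hc : holdsM n (fun _ => Some 0) (qe_concl (qn n))).
  { apply H.
    - intro; simpl; lia.
    - intros e He. simpl in He. destruct He as [<-|He].
      + unfold holdsM; simpl. rewrite evalM_nexts. simpl.
        destruct n; [lia|]. simpl. rewrite iterS_0 by lia. unfold succ.
        rewrite Nat.ltb_irrefl. reflexivity.
      + apply in_map_iff in He. destruct He as [i [<- _]]. reflexivity. }
  unfold holdsM in Hc; simpl in Hc. discriminate.
Qed.

Fixpoint size (t : term) : nat :=
  match t with Var _ => 0 | Ominus u => S (size u) | Next u => S (size u) end.
Fixpoint tvar (t : term) : nat :=
  match t with Var x => x | Ominus u => tvar u | Next u => tvar u end.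

Lemma evalM_shape n v t : evalM n v t = None \/
  exists k m, k <= size t /\ v (tvar t) = Some m /\ evalM n v t = Some (iterS n k m).
Proof.
  induction t; simpl; auto.
  - destruct (v n0) eqn:E; auto. right; exists 0, n1; auto.
  - destruct IHt as [-> | [k [m [Hk [Hm ->]]]]]; auto.
    right; exists (S k), m; simpl; repeat split; auto; lia.
Qed.

Section Emb.
Variables n g : nat.
Hypothesis Hg : g < n.

Definition pos (e : nat) : nat := if g <? e then e - S g else e + n - S g.
Definition ff (k : nat) : nat := if k <? n - 1 then 0 else S k.
Definition hh (o : option nat) : nat -> nat :=
  match o with None => fun _ => 0 | Some e => fun t => ff (pos e + t) end.

Lemma pos_lt e : e < n -> e <> g -> pos e < n - 1.
Proof. unfold pos; destruct (Nat.ltb_spec g e); lia. Qed.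

Lemma pos_succ e : e < n -> e <> g -> pos (succ n e) = S (pos e).
Proof.
  intros He Heg. unfold succ, pos.
  destruct (Nat.ltb_spec (S e) n); destruct (Nat.ltb_spec g e);
  try destruct (Nat.ltb_spec g (S e)); try destruct (Nat.ltb_spec g 0); lia.
Qed.

Lemma pos_inj e e' : e < n -> e' < n -> pos e = pos e' -> e = e'.
Proof. unfold pos; destruct (Nat.ltb_spec g e); destruct (Nat.ltb_spec g e'); lia. Qed.

Lemma hh_inj a b : inS n a -> inS n b -> hh a = hh b -> a = b.
Proof.
  intros Ha Hb H. pose proof (equal_f H n) as H'.
  destruct a, b; simpl in *; unfold ff in H'; auto;
  repeat match type of H' with context [?x <? ?y] => destruct (Nat.ltb_spec x y) end;
  try lia.
  f_equal. apply pos_inj; auto; lia.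
Qed.

Lemma transfer D v t : (forall x, inS n (v x)) ->
  (forall m k, v (tvar t) = Some m -> k <= D -> iterS n k m <> g) ->
  size t <= D -> eval (fun x => hh (v x)) t = hh (evalM n v t).
Proof.
  intros Hv Hcov. induction t; intro Hs; simpl in *.
  - reflexivity.
  - rewrite IHt by (auto; lia). unfold ds_ominus.
    destruct (evalM_shape n v t) as [E | [k [m [Hk [Hm E]]]]]; rewrite E; simpl.
    + reflexivity.
    + apply functional_extensionality; intro.
      pose proof (evalM_inS n v t Hv) as Hin. rewrite E in Hin; simpl in Hin.
      assert (Hne : iterS n k m <> g) by (apply Hcov; auto; lia).
      pose proof (pos_lt _ Hin Hne). unfold ff.
      destruct (Nat.ltb_spec (pos (iterS n k m) + 0) (n - 1)); lia.
  - rewrite IHt by (auto; lia). unfold ds_next.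
    destruct (evalM_shape n v t) as [E | [k [m [Hk [Hm E]]]]]; rewrite E; simpl.
    + reflexivity.
    + apply functional_extensionality; intro t0.
      pose proof (evalM_inS n v t Hv) as Hin. rewrite E in Hin; simpl in Hin.
      assert (Hne : iterS n k m <> g) by (apply Hcov; auto; lia).
      rewrite pos_succ by auto. f_equal. lia.
Qed.
End Emb.

Fixpoint sumn (l : list nat) : nat := match l with [] => 0 | a :: l => a + sumn l end.
Lemma in_sumn a l : In a l -> a <= sumn l.
Proof. induction l; simpl; [intros []|]. intros [Ha|Ha]; [subst; lia| specialize (IHl Ha); lia]. Qed.

Definition id_terms (e : identity) := [fst e; snd e].
Definition qe_terms q := flat_map id_terms (qe_concl q :: qe_prem q).
Definition ax_terms Ax := flat_map qe_terms Ax.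

Lemma ax_terms_in Ax q e : In q Ax -> (e = qe_concl q \/ In e (qe_prem q)) ->
  In (fst e) (ax_terms Ax) /\ In (snd e) (ax_terms Ax).
Proof.
  intros Hq He. unfold ax_terms. split; apply in_flat_map; exists q; split; auto;
  unfold qe_terms; apply in_flat_map; exists e; (split; [destruct He; subst; simpl; auto| simpl; auto]).
Qed.

Lemma length_flat_map_le {A B} (f : A -> list B) l c :
  (forall x, length (f x) <= c) -> length (flat_map f l) <= length l * c.
Proof.
  intro H; induction l; simpl; auto. rewrite length_app. specialize (H a). lia.
Qed.

Definition covered n D V (v : nat -> option nat) : list nat :=
  flat_map (fun x => match v x with Some m => map (fun k => iterS n k m) (seq 0 (S D))
                                  | None => [] end) (seq 0 V).

Lemma gap_exists n D V v : n = V * S D + 1 ->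
  exists g, g < n /\ ~ In g (covered n D V v).
Proof.
  intro Hn.
  destruct (Classical_Prop.classic (exists g, g < n /\ ~ In g (covered n D V v))) as [H|H]; auto.
  exfalso.
  assert (Hincl : incl (seq 0 n) (covered n D V v)).
  { intros g Hg. apply in_seq in Hg.
    destruct (Classical_Prop.classic (In g (covered n D V v))) as [|Hc]; auto.
    exfalso; apply H; exists g; split; auto; lia. }
  pose proof (NoDup_incl_length (seq_NoDup n 0) Hincl) as Hl.
  rewrite length_seq in Hl.
  assert (length (covered n D V v) <= length (seq 0 V) * S D).
  { apply length_flat_map_le. intro x. destruct (v x); simpl; auto.
    rewrite length_map, length_seq; auto. lia. }
  rewrite length_seq in H0. lia.
Qed.

Theorem mainTheorem14 :
  forall Ax : list quasiequation,
    (forall q, In q Ax -> valid q) ->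
    exists q : quasiequation, valid q /\ ~ provable Ax (qe_prem q) (qe_concl q).
Proof.
  intros Ax HAx.
  set (D := sumn (map size (ax_terms Ax))).
  set (V := S (sumn (map tvar (ax_terms Ax)))).
  set (n := V * S D + 1).
  assert (Hn : 0 < n) by (unfold n; lia).
  exists (qn n). split; [apply qn_valid; auto|].
  intro Hpr. apply (qn_fails n Hn).
  intros v Hv Hp.
  refine (soundM n Ax _ _ Hpr _ v Hv Hp).
  clear v Hv Hp.
  intros q Hq v Hv Hp.
  destruct (gap_exists n D V v eq_refl) as [g [Hg Hgap]].
  assert (Hbd : forall t, In t (ax_terms Ax) -> size t <= D /\ tvar t < V).
  { intros t Ht. split.
    - apply in_sumn. apply in_map; auto.
    - unfold V. apply Nat.lt_succ_r, in_sumn, in_map; auto. }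
  assert (Htr : forall t, In t (ax_terms Ax) ->
            eval (fun x => hh n g (v x)) t = hh n g (evalM n v t)).
  { intros t Ht. destruct (Hbd t Ht) as [Hs Hvr].
    apply (transfer n g Hg D); auto.
    intros m k Hm Hk Heq. apply Hgap. unfold covered. apply in_flat_map.
    exists (tvar t). split; [apply in_seq; lia|]. rewrite Hm. apply in_map_iff.
    exists k; split; auto. apply in_seq; lia. }
  pose proof (HAx q Hq nat (fun x => hh n g (v x))) as Hval.
  destruct (ax_terms_in Ax q (qe_concl q) Hq (or_introl eq_refl)) as [Hc1 Hc2].
  unfold holds, holdsM in *.
  rewrite (Htr _ Hc1), (Htr _ Hc2) in Hval.
  apply (hh_inj n g Hg); try apply evalM_inS; auto.
  apply Hval. intros e He.
  destruct (ax_terms_in Ax q e Hq (or_intror He)) as [He1 He2].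
  rewrite (Htr _ He1), (Htr _ He2). f_equal. apply Hp; auto.
Qed.
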